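(* Let $m,n \ge 2$ be integers. The Cartesian product $K_m \times K_n$ is a circulant graph if and only if either $\gcd(m,n)=1$ or $m=n=2$.
   Context: The Cartesian product $G \times H$ of graphs $G$ and $H$ has vertex set $V(G)\times V(H)$, with $(g,h)$ adjacent to $(g',h')$ if and only if either $g=g'$ and $h$ is adjacent to $h'$ in $H$, or $h=h'$ and $g$ is adjacent to $g'$ in $G$. For an integer $n\ge 1$ and a set $S$ of integers, the circulant graph $C_nS$ has vertex set $\{0,1,\dots,n-1\}$, with $i$ adjacent to $j$ if and only if $i-j \equiv \pm s \pmod n$ for some $s\in S$. A graph is circulant if it is isomorphic to some $C_nS$; equivalently, if its automorphism group contains a cyclic subgroup acting transitively on the vertices. $K_n$ denotes the complete graph on $n$ vertices (no loops). *)

(* Defs.v *)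
From mathcomp Require Import all_boot all_order all_algebra.
Set Implicit Arguments. Unset Strict Implicit. Unset Printing Implicit Defensive.
Import GRing.Theory Num.Theory.
Local Open Scope ring_scope.

Definition complete_adj (n : nat) : rel 'I_n := fun i j => i != j.
Arguments complete_adj n : clear implicits.

Definition cart_adj (V W : finType) (g : rel V) (h : rel W) : rel (V * W) :=
  fun x y => ((x.1 == y.1) && h x.2 y.2) || ((x.2 == y.2) && g x.1 y.1).

Definition circulant_adj (N : nat) (S : pred int) : 'I_N -> 'I_N -> Prop :=
  fun i j => exists2 s : int, S s &
      (((i%:Z - j%:Z) = s %[mod N%:Z])%Z \/ ((i%:Z - j%:Z) = - s %[mod N%:Z])%Z).

Definition graph_iso (V W : finType) (g : rel V) (h : W -> W -> Prop) : Prop :=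
  exists f : V -> W, bijective f /\ forall x y, g x y <-> h (f x) (f y).

Definition is_circulant (V : finType) (g : rel V) : Prop :=
  exists N : nat, exists S : pred int, @graph_iso V ('I_N : finType) g (@circulant_adj N S).

(* Main.v *)
Require Import Defs.
From mathcomp Require Import all_boot all_order all_algebra.
From mathcomp Require Import zify ring.

Section P3.
Variables (m n : nat).
Local Notation V := ('I_m * 'I_n)%type.
Local Notation adj := (cart_adj (complete_adj m) (complete_adj n)).

Lemma adjE (x y : V) : adj x y = ((x.1 == y.1) && (x.2 != y.2)) || ((x.2 == y.2) && (x.1 != y.1)).
Proof. by []. Qed.

Lemma adj_inc (x y w : V) : adj x y -> adj x w -> y != w ->
  adj y w = ((x.1 == y.1) == (x.1 == w.1)).
Proof.
case: x y w => [a b] [c d] [e f]; rewrite !adjE /= xpair_eqE.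
case: (eqVneq a c) => ac; case: (eqVneq a e) => ae;
case: (eqVneq b d) => bd; case: (eqVneq b f) => bf;
case: (eqVneq c e) => ce; case: (eqVneq d f) => df; subst => //=;
rewrite ?eqxx ?andbT ?andbF ?orbF //= ?(eq_sym c a) ?(eq_sym d b) ?(eq_sym e a) ?(eq_sym f b) ?(eq_sym e c) ?(eq_sym f d) ?ac ?ae ?bd ?bf ?ce ?df //=.

all: match goal with H : is_true (?x != ?x) |- _ => by rewrite eqxx in H end.
Qed.

Arguments adj_inc {x y w}.

Lemma adj_sym (x y : V) : adj x y = adj y x.
Proof. by rewrite !adjE (eq_sym x.1) (eq_sym x.2). Qed.

Variable phi : V -> V.
Hypothesis phi_inj : injective phi.
Hypothesis phi_adj : forall x y, adj (phi x) (phi y) = adj x y.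

Definition Dl (x y : V) := ((phi x).1 == (phi y).1) (+) (x.1 == y.1).

Lemma Dl_sym x y : Dl x y = Dl y x.
Proof. by rewrite /Dl eq_sym [y.1 == _]eq_sym. Qed.

Lemma Dl_sh x y w : adj x y -> adj x w -> Dl x y = Dl x w.
Proof.
move=> hy hw; case: (eqVneq y w) => [->//|yw].
have e1 := adj_inc hy hw yw.
have e2 : adj (phi y) (phi w) = (((phi x).1 == (phi y).1) == ((phi x).1 == (phi w).1)).
  apply: adj_inc; rewrite ?phi_adj //.
  by apply: contra yw => /eqP /phi_inj ->.
move: e2; rewrite phi_adj e1 /Dl.
by case: (_ == (phi y).1); case: (_ == (phi w).1); case: (x.1 == y.1); case: (x.1 == w.1).
Qed.

Arguments Dl_sh {x y w}.

Lemma Dl_const x y u v : adj x y -> adj u v -> Dl x y = Dl u v.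
Proof.
move=> hxy huv.
have key : forall z, adj z x -> adj z u -> Dl x y = Dl u v.
  move=> z hzx hzu.
  rewrite (Dl_sh hxy (_ : adj x z)) 1?adj_sym // Dl_sym (Dl_sh hzx hzu).
  by rewrite Dl_sym (Dl_sh (_ : adj u z) huv) 1?adj_sym.
case: (eqVneq x u) => [exu|xu]; first by subst u; exact: (Dl_sh hxy huv).
case hxu: (adj x u).
  by rewrite (Dl_sh hxy hxu) Dl_sym (Dl_sh (_ : adj u x) huv) // adj_sym.
move: key hxu xu; case: x {hxy} => a b; case: u {huv} => c d => key.
rewrite adjE /= xpair_eqE => hxu xu.
have [ac bd] : a != c /\ b != d.
  by move: hxu xu; case: (eqVneq a c) => ?; case: (eqVneq b d) => ? //=; subst; rewrite ?eqxx.
apply: (key (c, b)); rewrite adjE /= ?eqxx /= ?orbF.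
  by rewrite (eq_sym c a) ac andbF.
by rewrite bd.
Qed.

Lemma iter_order_mul (T : finType) (f : T -> T) x t : injective f ->
  iter (t * order f x) f x = x.
Proof.
move=> fi; elim: t => [|t IH] //=.
by rewrite mulSn iterD IH iter_order.
Qed.

Lemma order_le (T : finType) (f : T -> T) x : order f x <= #|T|.
Proof. exact: max_card. Qed.

Hypotheses (hm : 2 <= m) (hn : 2 <= n).
Hypothesis Hreg : forall k x, 0 < k < m * n -> iter k phi x != x.

Let a0 : 'I_m := Ordinal (leq_trans (isT : 0 < 2) hm).
Let b0 : 'I_n := Ordinal (leq_trans (isT : 0 < 2) hn).
Let b1 : 'I_n := Ordinal (leq_trans (isT : 1 < 2) hn).

Lemma adj_row {x y : V} : x.1 = y.1 -> x != y -> adj x y.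
Proof.
case: x y => [a b] [c d] /= -> ; rewrite xpair_eqE eqxx /= => bd.
by rewrite adjE /= eqxx bd.
Qed.

Lemma adj_col {x y : V} : x.2 = y.2 -> x != y -> adj x y /\ (x.1 == y.1) = false.
Proof.
case: x y => [a b] [c d] /= -> ; rewrite xpair_eqE eqxx andbT => ac.
by rewrite adjE /= eqxx ac orbT (negbTE ac).
Qed.

Lemma main3 : coprime m n \/ (m = 2 /\ n = 2).
Proof.
have hc : forall x y, adj x y -> Dl x y = Dl (a0, b0) (a0, b1).
  move=> x y hxy; apply: Dl_const => //; apply: adj_row => //.
case hD : (Dl (a0, b0) (a0, b1)).
- (* swap *)
  have r1 : forall x y : V, x.1 = y.1 -> (phi x).2 = (phi y).2.
    move=> x y e; case: (eqVneq x y) => [->//|xy].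
    have hxy := adj_row e xy.
    have := hc _ _ hxy; rewrite hD /Dl e eqxx addbT.
    move=> ne; have := hxy; rewrite -phi_adj adjE.
    by rewrite ne (negbTE ne) /= => /andP [/eqP].
  have r2 : forall x y : V, x.2 = y.2 -> (phi x).1 = (phi y).1.
    move=> x y e; case: (eqVneq x y) => [->//|xy].
    have [hxy e1] := adj_col e xy.
    by have := hc _ _ hxy; rewrite hD /Dl e1 addbF => /eqP.
  pose eps (b : 'I_n) := (phi (a0, b)).1.
  pose del (a : 'I_m) := (phi (a, b0)).2.
  have phiE : forall a b, phi (a, b) = (eps b, del a).
    move=> a b; rewrite [phi (a, b)]surjective_pairing.
    by rewrite /eps /del (r2 (a, b) (a0, b)) // (r1 (a, b) (a, b0)).
  have eps_inj : injective eps.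
    move=> b b' e; have : phi (a0, b) = phi (a0, b') by rewrite !phiE e.
    by move/phi_inj => [].
  have del_inj : injective del.
    move=> a a' e; have : phi (a, b0) = phi (a', b0) by rewrite !phiE e.
    by move/phi_inj => [].
  have := @leq_card _ _ _ eps_inj; have := @leq_card _ _ _ del_inj; rewrite !card_ord => le1 le2.
  have emn : m = n by apply/eqP; rewrite eqn_leq le1 le2.
  pose gam a := eps (del a).
  have gam_inj : injective gam by move=> a a' /eps_inj /del_inj.
  have itE : forall k a, iter k.*2 phi (a, del a) = (iter k gam a, del (iter k gam a)).
    move=> k a; elim: k => [//|k IH].
    by rewrite doubleS !iterS IH !phiE.
  have fix0 := itE (order gam a0) a0; rewrite iter_order // in fix0.
  have p0 := @order_gt0 _ gam a0; have pm := @order_le _ gam a0; rewrite card_ord in pm.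
  have [m2|m3] : m = 2 \/ 2 < m by lia.
    by right; split; lia.
  exfalso; suff : 0 < (order gam a0).*2 < m * n.
    by move/(Hreg _ (a0, del a0)); rewrite fix0 eqxx.
  rewrite -emn; apply/andP; split; first by rewrite double_gt0.
  rewrite -muln2; nia.
- (* preserve *)
  have r1 : forall x y : V, x.1 = y.1 -> (phi x).1 = (phi y).1.
    move=> x y e; case: (eqVneq x y) => [->//|xy].
    have hxy := adj_row e xy.
    by have := hc _ _ hxy; rewrite hD /Dl e eqxx addbT => /negbFE /eqP.
  have r2 : forall x y : V, x.2 = y.2 -> (phi x).2 = (phi y).2.
    move=> x y e; case: (eqVneq x y) => [->//|xy].
    have [hxy e1] := adj_col e xy.
    have := hc _ _ hxy; rewrite hD /Dl e1 addbF => ne.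
    have := hxy; rewrite -phi_adj adjE.
    by rewrite ne /= => /andP [/eqP].
  pose al (a : 'I_m) := (phi (a, b0)).1.
  pose be (b : 'I_n) := (phi (a0, b)).2.
  have phiE : forall a b, phi (a, b) = (al a, be b).
    move=> a b; rewrite [phi (a, b)]surjective_pairing.
    by rewrite /al /be (r1 (a, b) (a, b0)) // (r2 (a, b) (a0, b)).
  have al_inj : injective al.
    move=> a a' e; have : phi (a, b0) = phi (a', b0) by rewrite !phiE e.
    by move/phi_inj => [].
  have be_inj : injective be.
    move=> b b' e; have : phi (a0, b) = phi (a0, b') by rewrite !phiE e.
    by move/phi_inj => [].
  have itE : forall k a b, iter k phi (a, b) = (iter k al a, iter k be b).
    move=> k a b; elim: k => [//|k IH].
    by rewrite !iterS IH phiE.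
  set p := order al a0; set q := order be b0.
  have p0 : 0 < p := order_gt0 _ _.
  have q0 : 0 < q := order_gt0 _ _.
  have pm : p <= m by have := @order_le _ al a0; rewrite card_ord.
  have qn : q <= n by have := @order_le _ be b0; rewrite card_ord.
  have fix0 : iter (lcmn p q) phi (a0, b0) = (a0, b0).
    rewrite itE; congr (_, _); [rewrite -(divnK (dvdn_lcml p q)) | rewrite -(divnK (dvdn_lcmr p q))].
    exact: (@iter_order_mul _ al a0 _ al_inj). exact: (@iter_order_mul _ be b0 _ be_inj).
  have kge : m * n <= lcmn p q.
    rewrite leqNgt; apply/negP => lt.
    have := Hreg (lcmn p q) (a0, b0).
    by rewrite fix0 eqxx lcmn_gt0 p0 q0 lt => /(_ isT).
  have lpq : lcmn p q <= p * q.
    by apply: dvdn_leq; [rewrite muln_gt0 p0 q0 | rewrite dvdn_lcm dvdn_mulr ?dvdn_mull].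
  have ep : p = m by nia.
  have eq : q = n by nia.
  rewrite ep eq in kge; left.
  have := muln_lcm_gcd m n; have := gcdn_gt0 m n.
  rewrite (leq_trans (isT : 0 < 2) hm) /= /coprime => g0 E.
  apply/eqP; nia.
Qed.
End P3.

Module M2.
Import GRing.Theory Num.Theory.
Local Open Scope ring_scope.

Lemma modz_diff (a b N : int) :
  (a %% N)%Z - (b %% N)%Z = ((b %/ N)%Z - (a %/ N)%Z) * N + (a - b).
Proof.
move: (divz_eq a N) (divz_eq b N).
move: (a %/ N)%Z (a %% N)%Z (b %/ N)%Z (b %% N)%Z => qa ra qb rb ea eb.
rewrite [in X in _ = _ + X]ea [in X in _ = _ + X]eb; ring.
Qed.

Lemma ordS_diff N (i j : 'I_N) :
  (((ordS i)%:Z - (ordS j)%:Z) = (i%:Z - j%:Z) %[mod N%:Z])%Z.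
Proof.
rewrite /ordS /= -!modz_nat.
set a := (i.+1)%:Z; set b := (j.+1)%:Z.
rewrite modz_diff.
rewrite modzMDl; congr (_ %% _)%Z.
rewrite /a /b -[i.+1]addn1 -[j.+1]addn1 !PoszD.
by rewrite opprD addrACA subrr addr0.
Qed.

Lemma circ_shift N S (i j : 'I_N) :
  circulant_adj S (ordS i) (ordS j) <-> circulant_adj S i j.
Proof. by rewrite /circulant_adj ordS_diff. Qed.


Lemma iter_ordS N (i : 'I_N) k : val (iter k (@ordS N) i) = ((i + k) %% N)%N.
Proof.
elim: k => [|k IH] /=; first by rewrite addn0 modn_small.
by rewrite IH /= -addn1 modnDml; congr (_ %% _)%N; lia.
Qed.

Lemma forward (m n : nat) (hm : (2 <= m)%N) (hn : (2 <= n)%N) :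
  is_circulant (cart_adj (complete_adj m) (complete_adj n)) ->
  coprime m n \/ (m = 2%N /\ n = 2%N).
Proof.
case=> N [S [f [fbij fadj]]].
have hN : (m * n)%N = N by have := bij_eq_card fbij; rewrite card_prod !card_ord.
case: fbij => g fg gf.
pose phi x := g (ordS (f x)).
have itE : forall k x, iter k phi x = g (iter k (@ordS N) (f x)).
  move=> k x; elim: k => [|k IH] /=; first by rewrite fg.
  by rewrite IH /phi gf.
apply: (@main3 m n phi) => //.
- by move=> x y /(can_inj gf) /ordS_inj /(can_inj fg).
- move=> x y; apply/idP/idP => H.
    by apply/(fadj x y); rewrite -circ_shift -[ordS (f x)]gf -[ordS (f y)]gf; apply/fadj.
  by apply/(fadj (phi x) (phi y)); rewrite /phi !gf circ_shift; apply/fadj.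
- move=> k x /andP [k0 kN]; apply/eqP; rewrite itE => E.
  have := congr1 (fun z => val (f z)) E; rewrite /= gf iter_ordS.
  move=> E2.
  have fxN : (f x < N)%N := ltn_ord _.
  rewrite hN in kN.
  have : (k = 0 %[mod N])%N.
    by apply/eqP; rewrite -(eqn_modDl (f x)) addn0 E2 modn_small.
  rewrite mod0n modn_small // => k00; by rewrite k00 in k0.
Qed.

End M2.
Module M4.
Import GRing.Theory Num.Theory.
Local Open Scope ring_scope.

Lemma circ_S N (S : pred int) :
  (forall s t, (s = t %[mod N%:Z])%Z -> S s = S t) -> (forall s, S (- s) = S s) ->
  forall i j : 'I_N, circulant_adj S i j <-> S (i%:Z - j%:Z).
Proof.
move=> Sm SN i j; split.
  by case=> s Ss [/Sm ->|/Sm ->]; rewrite ?SN.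
by move=> H; exists (i%:Z - j%:Z) => //; left.
Qed.

Lemma dvd_diff (d u v a b : nat) : (u = a %[mod d])%N -> (v = b %[mod d])%N ->
  (d%:Z %| u%:Z - v%:Z)%Z = (a == b %[mod d])%N.
Proof.
move=> Hu Hv; rewrite -eqz_mod_dvd !modz_nat eqz_nat Hu Hv.
by [].
Qed.

Lemma dvd_inv (m N : nat) (s t : int) : (m %| N)%N -> (s = t %[mod N%:Z])%Z ->
  (m%:Z %| s)%Z = (m%:Z %| t)%Z.
Proof.
move=> mN /eqP; rewrite eqz_mod_dvd => h.
have h2 : (m%:Z %| s - t)%Z.
  apply: dvdz_trans h; case/dvdnP: mN => q ->; rewrite PoszM; exact: dvdz_mull.
by rewrite -(subrK t s) rpredDl.
Qed.

Lemma backward_coprime (m n : nat) (hm : (2 <= m)%N) (hn : (2 <= n)%N) :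
  coprime m n -> is_circulant (cart_adj (complete_adj m) (complete_adj n)).
Proof.
move=> co.
have mn0 : (0 < m * n)%N by rewrite muln_gt0; lia.
pose F (x : 'I_m * 'I_n) : 'I_(m * n) := Ordinal (ltn_pmod (chinese m n x.1 x.2) mn0).
have Fm : forall x, (F x = x.1 %[mod m])%N.
  by move=> x; rewrite /= modn_dvdm ?dvdn_mulr // chinese_modl.
have Fn : forall x, (F x = x.2 %[mod n])%N.
  by move=> x; rewrite /= modn_dvdm ?dvdn_mull // chinese_modr.
exists (m * n)%N, (fun s : int => (m%:Z %| s)%Z != (n%:Z %| s)%Z), F; split.
  apply: inj_card_bij; last by rewrite card_prod !card_ord.
  move=> [a b] [c d] E.
  have := Fm (a, b); rewrite E Fm /= !modn_small // => /val_inj ea.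
  have := Fn (a, b); rewrite E Fn /= !modn_small // => /val_inj eb.
  by rewrite ea eb.
move=> x y; rewrite circ_S; first last.
- by move=> s; rewrite !rpredN.
- by move=> s t st; rewrite (@dvd_inv m (m * n)%N s t (dvdn_mulr _ (dvdnn m)) st) (@dvd_inv n (m * n)%N s t (dvdn_mull _ (dvdnn n)) st).
rewrite (dvd_diff _ _ _ _ _ (Fm x) (Fm y)) (dvd_diff _ _ _ _ _ (Fn x) (Fn y)) !modn_small //.
case: x y => [a b] [c d] /=.
rewrite /cart_adj /complete_adj /=.
have E1 : ((a : nat) == c) = (a == c) by [].
have E2 : ((b : nat) == d) = (b == d) by [].
rewrite ?E1 ?E2.
by case: (a == c); case: (b == d).
Qed.

Lemma backward22 : is_circulant (cart_adj (complete_adj 2) (complete_adj 2)).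
Proof.
pose F (x : 'I_2 * 'I_2) : 'I_4 := inord (2 * x.1 + (x.1 != x.2))%N.
pose S' := fun s : int => ((s %% 4)%Z == 1) || ((s %% 4)%Z == 3).
have FE : forall x, ((F x) : nat) = (2 * x.1 + (x.1 != x.2))%N.
  move=> [a b]; rewrite /F inordK //=.
  case: a b => [[|[|a]] Ha] [[|[|b]] Hb] //.
have Finj : injective F.
  move=> [a b] [c d] /(congr1 (@nat_of_ord 4)); rewrite !FE /=.
  case: a b c d => [[|[|a]] Ha] [[|[|b]] Hb] [[|[|c]] Hc] [[|[|d]] Hd] //= _;
  by congr pair; apply: val_inj.
exists 4%N, S', F; split.
  by apply: inj_card_bij; last by rewrite card_prod !card_ord.
move=> x y; rewrite circ_S; first last.
- move=> s; rewrite /S' -modzNm.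
  have : (0 <= (s %% 4)%Z < 4) by rewrite modz_ge0 ?ltz_pmod.
  move: (s %% 4)%Z => r hr.
  have : r = 0 \/ r = 1 \/ r = 2 \/ r = 3 by lia.
  by case=> [->|[->|[->|->]]].
- by move=> s t st; rewrite /S' st.
rewrite !FE.
case: x y => [[[|[|a]] Ha] [[|[|b]] Hb]] [[[|[|c]] Hc] [[|[|d]] Hd]] //=.
Qed.

End M4.

Theorem corollary5 (m n : nat) (hm : 2 <= m) (hn : 2 <= n) :
  is_circulant (cart_adj (complete_adj m) (complete_adj n)) <->
  coprime m n \/ (m = 2 /\ n = 2).
Proof.
split; first exact: M2.forward.
case=> [co|[-> ->]]; first exact: M4.backward_coprime.
exact: M4.backward22.
Qed.
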